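(* Let $A\subset\mathcal{N}=\omega^\omega$, let $\mathcal{F}=\mathcal{F}_A$ be the family of all closed and discrete subsets of $A$, let $\{T_a : a\in A\}$ be an $(A,\mathcal{F})$-Reznichenko family of trees and $\mathcal{T}=\bigcup_{a\in A}T_a$. Let $\{U_n\}_{n<\omega}$ be a disjoint family of open subsets of $A$ whose union is closed in $A$, and let $\mathcal{T}=\bigcup_{n<\omega}D_n$. Then there exists $n<\omega$ such that $D_n\cap T_a$ is successively dense in the tree $T_a$ for every $a\in U_n$.
   Context: A tree is a partially ordered set $(T,\leq)$ in which for each $t$ the set $\{s: s<t\}$ is well ordered and which has a minimum, the root. An immediate successor of $t$ is a node $s>t$ with no $r$ satisfying $t<r<s$. The height is the least ordinal $\alpha$ such that no node has predecessor set of order type $\alpha$. A segment is a set $S\subset T$ of pairwise comparable elements such that $t\leq r\leq s$ with $t,s\in S$ implies $r\in S$; it is initial if it contains the root. For a set $A$ with $|A|\leq\mathfrak{c}$ and a hereditary family $\mathcal{F}$ of subsets of $A$, an $(A,\mathcal{F})$-Reznichenko family of trees is a family $\{T_a:a\in A\}$ of trees such that: (1) each $T_a$ has height $\omega$ and every node has $\mathfrak{c}$ many immediate successors; (2) $T_a\cap A=\{a\}$ and $a$ is the root of $T_a$; (3) for every $t\in\bigcup_a T_a$, $\{a\in A: t\in T_a\}\in\mathcal{F}$; (4) for $a\neq b$ and segments $S\subset T_a$, $S'\subset T_b$, $|S\cap S'|\leq 1$; (5) for every $B\in\mathcal{F}$ and every disjoint family $\{S_b:b\in B\}$ with $S_b$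 a finite initial segment of $T_b$, there are $\mathfrak{c}$ many $t$ that are simultaneously an immediate successor of $S_b$ in $T_b$ for all $b\in B$. A subset $D$ of a tree $T$ is successively dense if there is a countable family $R$ of immediate successors of the root such that every $t\in T$ incomparable with every element of $R$ has an immediate successor in $D$. *)

(* Defs.v *)
From Stdlib Require Import List Arith.
Import ListNotations.

Set Implicit Arguments.

Definition baire := nat -> nat.

Definition agree (n : nat) (x y : baire) : Prop := forall i, i < n -> x i = y i.

Definition rel_open (A U : baire -> Prop) : Prop :=
  (forall x, U x -> A x) /\
  (forall x, U x -> exists n, forall y, A y -> agree n x y -> U y).

Definition rel_closed (A C : baire -> Prop) : Prop :=
  (forall x, C x -> A x) /\ rel_open A (fun x => A x /\ ~ C x).

Definition rel_discrete (B : baire -> Prop) : Prop :=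
  forall x, B x -> exists n, forall y, B y -> agree n x y -> y = x.

Definition closed_discrete (A : baire -> Prop) (B : baire -> Prop) : Prop :=
  rel_closed A B /\ rel_discrete B.

Definition finite_set {X : Type} (P : X -> Prop) : Prop :=
  exists l : list X, forall x, P x -> In x l.

Definition has_size {X : Type} (P : X -> Prop) (n : nat) : Prop :=
  exists l : list X, NoDup l /\ length l = n /\ forall x, P x <-> In x l.

Definition countable_set {X : Type} (P : X -> Prop) : Prop :=
  exists g : X -> nat, forall x y, P x -> P y -> g x = g y -> x = y.

Definition card_c {X : Type} (P : X -> Prop) : Prop :=
  exists f : (nat -> bool) -> X,
    (forall z, P (f z)) /\ (forall z w, f z = f w -> z = w) /\
    (forall x, P x -> exists z, f z = x).

Section Trees.
Variable X : Type.
Variable T : X -> Prop.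
Variable le : X -> X -> Prop.

Definition lt (x y : X) : Prop := le x y /\ x <> y.

Definition is_root (r : X) : Prop := T r /\ forall t, T t -> le r t.

Definition preds (t : X) : X -> Prop := fun s => T s /\ lt s t.

Definition is_tree : Prop :=
  (forall x, T x -> le x x) /\
  (forall x y, T x -> T y -> le x y -> le y x -> x = y) /\
  (forall x y z, T x -> T y -> T z -> le x y -> le y z -> le x z) /\
  (exists r, is_root r) /\
  (forall t, T t ->
     (forall x y, preds t x -> preds t y -> le x y \/ le y x) /\
     (forall Q : X -> Prop, (forall x, Q x -> preds t x) -> (exists x, Q x) ->
        exists m, Q m /\ forall x, Q x -> le m x)).

(* height omega: every n < omega is the order type of some predecessor set,
   and no predecessor set has order type >= omega (i.e. all are finite) *)
Definition height_omega : Prop :=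
  (forall t, T t -> finite_set (preds t)) /\
  (forall n, exists t, T t /\ has_size (preds t) n).

Definition imm_succ (t s : X) : Prop :=
  T s /\ lt t s /\ ~ (exists r, T r /\ lt t r /\ lt r s).

Definition segment (S : X -> Prop) : Prop :=
  (forall x, S x -> T x) /\
  (forall x y, S x -> S y -> le x y \/ le y x) /\
  (forall t r s, S t -> S s -> T r -> le t r -> le r s -> S r).

Definition initial_segment (S : X -> Prop) : Prop :=
  segment S /\ exists r, is_root r /\ S r.

Definition imm_succ_seg (S : X -> Prop) (t : X) : Prop :=
  exists m, S m /\ (forall s, S s -> le s m) /\ imm_succ m t.

Definition succ_dense (D : X -> Prop) : Prop :=
  exists R : X -> Prop,
    countable_set R /\
    (exists r, is_root r /\ forall x, R x -> imm_succ r x) /\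
    (forall t, T t -> (forall x, R x -> ~ le t x /\ ~ le x t) ->
       exists s, imm_succ t s /\ D s).
End Trees.

Definition bigT {X : Type} (A : baire -> Prop) (T : baire -> X -> Prop) : X -> Prop :=
  fun t => exists a, A a /\ T a t.

(* (A,F)-Reznichenko family of trees {T_a : a in A}; the trees live in a
   common universe X, into which the points of A embed via emb;
   tree T_a carries its own order le a. *)
Definition reznichenko (X : Type) (emb : baire -> X) (A : baire -> Prop)
  (F : (baire -> Prop) -> Prop) (T : baire -> X -> Prop) (le : baire -> X -> X -> Prop) : Prop :=
  (forall a, A a ->
     is_tree (T a) (le a) /\ height_omega (T a) (le a) /\
     forall t, T a t -> card_c (imm_succ (T a) (le a) t)) /\
  (forall a, A a ->
     T a (emb a) /\ is_root (T a) (le a) (emb a) /\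
     forall b, A b -> T a (emb b) -> b = a) /\
  (forall t, bigT A T t -> F (fun a => A a /\ T a t)) /\
  (forall a b, A a -> A b -> a <> b ->
     forall S S', segment (T a) (le a) S -> segment (T b) (le b) S' ->
     forall x y, S x -> S' x -> S y -> S' y -> x = y) /\
  (forall B, F B -> forall Sf : baire -> X -> Prop,
     (forall b, B b -> finite_set (Sf b) /\ initial_segment (T b) (le b) (Sf b)) ->
     (forall b b' x, B b -> B b' -> b <> b' -> Sf b x -> Sf b' x -> False) ->
     card_c (fun t => bigT A T t /\
                      forall b, B b -> imm_succ_seg (T b) (le b) (Sf b) t)).

(* Main.v *)
Require Import Defs.
From Stdlib Require Import List Arith Lia Classical ClassicalEpsilon FunctionalExtensionality.
Import ListNotations.

Section TreeLemmas.
Variable X : Type.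
Variable T : X -> Prop.
Variable le : X -> X -> Prop.
Hypothesis Htr : is_tree T le.

Lemma below_chain t x y : T t -> T x -> T y -> le x t -> le y t -> le x y \/ le y x.
Proof.
  destruct Htr as [Hrefl [Hanti [Htrans [_ Hwo]]]].
  intros Tt Tx Ty lxt lyt.
  destruct (classic (x = t)) as [->|nx]; [right; exact lyt|].
  destruct (classic (y = t)) as [->|ny]; [left; exact lxt|].
  apply (proj1 (Hwo t Tt)); split; auto; split; auto.
Qed.

Lemma ht1 r y : is_root T le r -> T y -> y <> r ->
  exists m, imm_succ T le r m /\ le m y.
Proof.
  destruct Htr as [Hrefl [Hanti [Htrans [_ Hwo]]]].
  intros [Hr Hroot] Hy Hne.
  destruct (classic (exists s, preds T le y s /\ lt le r s)) as [Hex|Hno].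
  - destruct (proj2 (Hwo y Hy) (fun s => preds T le y s /\ lt le r s)
       (fun x H => proj1 H) Hex) as [m [[[Tm [lmy nmy]] lrm] Hmin]].
    exists m. split; [|exact lmy].
    split; [exact Tm|]. split; [exact lrm|].
    intros [z [Tz [lrz [lzm nzm]]]].
    assert (Qz : preds T le y z /\ lt le r z).
    { split; [|exact lrz]. split; [exact Tz|]. split.
      - exact (Htrans z m y Tz Tm Hy lzm lmy).
      - intro e; subst z. apply nmy. apply Hanti; auto. }
    apply nzm. apply Hanti; auto.
  - exists y. split; [|apply Hrefl; exact Hy].
    split; [exact Hy|]. split.
    + split; [apply Hroot; exact Hy| intro e; apply Hne; symmetry; exact e].
    + intros [z [Tz [lrz lzy]]]. apply Hno. exists z. split; [split; [exact Tz|exact lzy]|exact lrz].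
Qed.

Lemma uniq1 r y m m' : T y -> imm_succ T le r m -> imm_succ T le r m' ->
  le m y -> le m' y -> m = m'.
Proof.
  intros Ty Hm Hm' lmy lmy'.
  pose proof Hm as [Tm [lrm nm]]. pose proof Hm' as [Tm' [lrm' nm']].
  destruct (classic (m = m')) as [e|ne]; [exact e|exfalso].
  destruct (below_chain y m m' Ty Tm Tm' lmy lmy') as [l|l].
  - apply nm'. exists m. split; [exact Tm|]. split; [exact lrm|]. split; auto.
  - apply nm. exists m'. split; [exact Tm'|]. split; [exact lrm'|]. split; auto.
Qed.
End TreeLemmas.
Arguments below_chain {X T le} Htr {t x y}.
Arguments ht1 {X T le} Htr {r y}.
Arguments uniq1 {X T le} Htr {r y m m'}.

Lemma countable_of_list {X : Type} (K : list X) (Rel : X -> X -> Prop) (R : X -> Prop) :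
  (forall x, R x -> exists y, In y K /\ Rel x y) ->
  (forall x x' y, R x -> R x' -> Rel x y -> Rel x' y -> x = x') ->
  countable_set R.
Proof.
  intros H1 H2.
  exists (fun x => epsilon (inhabits 0) (fun j => exists y, nth_error K j = Some y /\ Rel x y)).
  intros x x' Rx Rx' e.
  assert (Ex : forall z, R z -> exists y, nth_error K (epsilon (inhabits 0) (fun j => exists y, nth_error K j = Some y /\ Rel z y)) = Some y /\ Rel z y).
  { intros z Rz. apply (epsilon_spec (inhabits 0) (fun j => exists y, nth_error K j = Some y /\ Rel z y)).
    destruct (H1 z Rz) as [y [Hy Ry]]. destruct (In_nth_error _ _ Hy) as [j Hj].
    exists j, y. auto. }
  destruct (Ex x Rx) as [y [Hy Ry]]. destruct (Ex x' Rx') as [y' [Hy' Ry']].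
  rewrite e in Hy. rewrite Hy in Hy'. injection Hy' as ->.
  exact (H2 x x' y' Rx Rx' Ry Ry').
Qed.

Lemma rec_choice {St : Type} (P : nat -> St -> St -> Prop) (s0 : St) :
  (forall n s, exists s', P n s s') ->
  exists f : nat -> St, f 0 = s0 /\ forall n, P n (f n) (f (S n)).
Proof.
  intros H. assert (i : inhabited St) by (constructor; exact s0).
  exists (fix f n := match n with 0 => s0 | S k => epsilon i (P k (f k)) end).
  split; [reflexivity|]. intro n. cbn. apply epsilon_spec. apply H.
Qed.

Theorem lemma4p3 (X : Type) (emb : baire -> X)
  (Hemb : forall x y, emb x = emb y -> x = y)
  (A : baire -> Prop) (T : baire -> X -> Prop) (le : baire -> X -> X -> Prop)
  (HR : reznichenko emb A (closed_discrete A) T le)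
  (U : nat -> baire -> Prop)
  (HUo : forall n, rel_open A (U n))
  (HUd : forall n m x, U n x -> U m x -> n = m)
  (HUc : rel_closed A (fun x => exists n, U n x))
  (D : nat -> X -> Prop)
  (HD : forall x, bigT A T x <-> exists n, D n x) :
  exists n, forall a, U n a ->
    succ_dense (T a) (le a) (fun x => D n x /\ T a x).
Proof.
  destruct HR as [H1 [H2 [H3 [H4 H5]]]].
  destruct (classic (exists n, forall a, U n a ->
    succ_dense (T a) (le a) (fun x => D n x /\ T a x))) as [|Hno]; [assumption|exfalso].
  assert (Hall : forall n, exists a, U n a /\ ~ succ_dense (T a) (le a) (fun x => D n x /\ T a x)).
  { intro n. apply NNPP; intro Hc. apply Hno. exists n. intros a Ha.
    apply NNPP. intro Hs. apply Hc. exists a. auto. }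
  set (a := fun n => epsilon (inhabits (fun _ : nat => 0))
     (fun a => U n a /\ ~ succ_dense (T a) (le a) (fun x => D n x /\ T a x))).
  assert (Ha : forall n, U n (a n) /\ ~ succ_dense (T (a n)) (le (a n)) (fun x => D n x /\ T (a n) x)).
  { intro n. exact (epsilon_spec _ _ (Hall n)). }
  clearbody a.
  assert (HaA : forall n, A (a n)) by (intro n; exact (proj1 (HUo n) _ (proj1 (Ha n)))).
  assert (Hainj : forall n m, a n = a m -> n = m).
  { intros n m e. apply (HUd n m (a n)); [exact (proj1 (Ha n))| rewrite e; exact (proj1 (Ha m))]. }
  assert (Htree : forall n, is_tree (T (a n)) (le (a n))) by (intro n; exact (proj1 (H1 _ (HaA n)))).
  assert (Hfin : forall n t, T (a n) t -> finite_set (preds (T (a n)) (le (a n)) t))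
    by (intros n t Tt; exact (proj1 (proj1 (proj2 (H1 _ (HaA n)))) t Tt)).
  assert (Hroot : forall n, is_root (T (a n)) (le (a n)) (emb (a n)))
    by (intro n; exact (proj1 (proj2 (H2 _ (HaA n))))).
  set (Good := fun n (K : list X) t => T (a n) t /\
     (forall x, imm_succ (T (a n)) (le (a n)) (emb (a n)) x ->
        (exists y, In y K /\ (T (a n) y /\ le (a n) x y)) ->
        ~ le (a n) t x /\ ~ le (a n) x t) /\
     ~ (exists s, imm_succ (T (a n)) (le (a n)) t s /\ (D n s /\ T (a n) s))).
  assert (Hgood : forall n K, exists t, Good n K t).
  { intros n K. pose proof (proj2 (Ha n)) as Hns. apply NNPP; intro Hc. apply Hns.
    exists (fun x => imm_succ (T (a n)) (le (a n)) (emb (a n)) x /\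
        exists y, In y K /\ (T (a n) y /\ le (a n) x y)).
    split.
    { apply (countable_of_list K (fun x y => T (a n) y /\ le (a n) x y)).
      - intros x [_ H]. exact H.
      - intros x x' y [Hx _] [Hx' _] [Ty l] [_ l'].
        exact (uniq1 (Htree n) Ty Hx Hx' l l'). }
    split.
    { exists (emb (a n)). split; [exact (Hroot n)|]. intros x [Hx _]; exact Hx. }
    intros t Tt Hinc. apply NNPP; intro Hs. apply Hc. exists t.
    split; [exact Tt|]. split.
    - intros x Hx Hy. apply Hinc. split; assumption.
    - exact Hs. }
  set (P := fun n K K' => exists t L, Good n K t /\
      (forall z, preds (T (a n)) (le (a n)) t z -> In z L) /\ K' = K ++ t :: L).
  destruct (rec_choice P [] ) as [Kf [_ HK]].
  { intros n K. destruct (Hgood n K) as [t Gt].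
    destruct (Hfin n t (proj1 Gt)) as [L HL].
    exists (K ++ t :: L), t, L. auto. }
  set (tt := fun n => epsilon (inhabits (emb (a 0))) (fun t => exists L, Good n (Kf n) t /\
      (forall z, preds (T (a n)) (le (a n)) t z -> In z L) /\ Kf (S n) = Kf n ++ t :: L)).
  assert (Htt : forall n, exists L, Good n (Kf n) (tt n) /\
      (forall z, preds (T (a n)) (le (a n)) (tt n) z -> In z L) /\ Kf (S n) = Kf n ++ tt n :: L).
  { intro n. apply (epsilon_spec (inhabits (emb (a 0))) (fun t => exists L, Good n (Kf n) t /\
      (forall z, preds (T (a n)) (le (a n)) t z -> In z L) /\ Kf (S n) = Kf n ++ t :: L)).
    exact (HK n). }
  clearbody tt.
  assert (Mono : forall m k y, In y (Kf m) -> In y (Kf (m + k))).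
  { intros m k y Hy. induction k as [|k IH].
    - rewrite Nat.add_0_r. exact Hy.
    - rewrite Nat.add_succ_r. destruct (Htt (m + k)) as [L [_ [_ ->]]].
      apply in_or_app; left; exact IH. }
  set (Seg := fun n y => T (a n) y /\ le (a n) y (tt n)).
  assert (SegK : forall m n y, m < n -> Seg m y -> In y (Kf n)).
  { intros m n y Hmn [Ty ly].
    assert (In y (Kf (S m))).
    { destruct (Htt m) as [L [_ [HL ->]]]. apply in_or_app; right.
      destruct (classic (y = tt m)) as [->|ne]; [left; reflexivity|].
      right. apply HL. split; [exact Ty|]. split; assumption. }
    replace n with (S m + (n - S m)) by lia. apply Mono. assumption. }
  assert (Disj : forall m n x, m < n -> Seg m x -> Seg n x -> False).
  { intros m n x Hmn Sm [Tx lx].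
    pose proof (SegK m n x Hmn Sm) as Kx.
    assert (ne : x <> emb (a n)).
    { intro e. subst x. destruct Sm as [Tm _].
      pose proof (proj2 (proj2 (H2 _ (HaA m))) (a n) (HaA n) Tm) as e.
      apply Hainj in e. lia. }
    destruct (ht1 (Htree n) (Hroot n) Tx ne) as [r [Hr lr]].
    destruct (Htt n) as [L [[Tt [Gi _]] _]].
    destruct (Gi r Hr (ex_intro _ x (conj Kx (conj Tx lr)))) as [_ Hn].
    apply Hn. destruct (Htree n) as [_ [_ [Htrans _]]].
    exact (Htrans r x (tt n) (proj1 Hr) Tx Tt lr lx). }
  set (B := fun b => exists n, b = a n).
  assert (HB : closed_discrete A B).
  { split; [split|].
    - intros x [n ->]. apply HaA.
    - split; [intros x [Ax _]; exact Ax|].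
      intros x [Ax nBx]. destruct (classic (exists n, U n x)) as [[m Um]|nU].
      + destruct (proj2 (HUo m) x Um) as [k Hk].
        assert (Hi : exists i, x i <> a m i).
        { apply NNPP; intro Hc. apply nBx. exists m. apply functional_extensionality.
          intro i. apply NNPP. intro h. apply Hc. exists i. exact h. }
        destruct Hi as [i Hi]. exists (k + S i). intros y Ay Hag. split; [exact Ay|].
        intros [j ->].
        assert (Umj : U m (a j)) by (apply Hk; [exact Ay| intros i' Hi'; apply Hag; lia]).
        pose proof (HUd j m (a j) (proj1 (Ha j)) Umj) as ->.
        apply Hi. apply Hag. lia.
      + destruct (proj2 (proj2 HUc) x (conj Ax nU)) as [k Hk].
        exists k. intros y Ay Hag. split; [exact Ay|]. intros [j ->].
        apply (proj2 (Hk _ Ay Hag)). exists j. exact (proj1 (Ha j)).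
    - intros x [n ->]. destruct (proj2 (HUo n) (a n) (proj1 (Ha n))) as [k Hk].
      exists k. intros y [j ->] Hag.
      pose proof (HUd j n (a j) (proj1 (Ha j)) (Hk _ (HaA j) Hag)) as ->. reflexivity. }
  set (Sf := fun b x => exists n, b = a n /\ Seg n x).
  assert (SfE : forall n x, Sf (a n) x <-> Seg n x).
  { intros n x. split.
    - intros [n' [e Sx]]. apply Hainj in e. subst n'. exact Sx.
    - intro Sx. exists n. auto. }
  destruct (H5 B HB Sf) as [f [Hf _]].
  - intros b [n ->]. split.
    + destruct (Htt n) as [L [_ [HL _]]]. exists (tt n :: L).
      intros x Sx. apply SfE in Sx. destruct Sx as [Tx lx].
      destruct (classic (x = tt n)) as [->|ne]; [left; reflexivity|].
      right. apply HL. split; [exact Tx|]. split; assumption.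
    + destruct (Htt n) as [L [[Tt _] _]].
      destruct (Htree n) as [Hrefl [Hanti [Htrans _]]].
      split; [split; [|split]|].
      * intros x Sx. apply SfE in Sx. exact (proj1 Sx).
      * intros x y Sx Sy. apply SfE in Sx. apply SfE in Sy.
        destruct Sx as [Tx lx]. destruct Sy as [Ty ly].
        exact (below_chain (Htree n) Tt Tx Ty lx ly).
      * intros t r s St Ss Tr ltr lrs. apply SfE in St. apply SfE in Ss. apply SfE.
        destruct Ss as [Ts ls]. split; [exact Tr|].
        exact (Htrans r s (tt n) Tr Ts Tt lrs ls).
      * exists (emb (a n)). split; [exact (Hroot n)|]. apply SfE.
        split; [exact (proj1 (Hroot n))| exact (proj2 (Hroot n) _ Tt)].
  - intros b b' x [n ->] [n' ->] ne Sx Sx'.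
    apply SfE in Sx. apply SfE in Sx'.
    assert (n <> n') by (intro e; apply ne; subst; reflexivity).
    destruct (Nat.lt_gt_cases n n') as [[l|l] _]; [assumption| |].
    + exact (Disj n n' x l Sx Sx').
    + exact (Disj n' n x l Sx' Sx).
  - destruct (Hf (fun _ => true)) as [Hbig Hall2].
    set (t := f (fun _ => true)) in *.
    destruct (proj1 (HD t) Hbig) as [m Dm].
    destruct (Hall2 (a m) (ex_intro _ m eq_refl)) as [m' [Sm' [Hmax Hsucc]]].
    apply SfE in Sm'.
    destruct (Htt m) as [L [[Tt [_ Gn]] _]].
    assert (Stm : Sf (a m) (tt m)).
    { apply SfE. split; [exact Tt|]. exact (proj1 (Htree m) _ Tt). }
    pose proof (Hmax _ Stm) as l1.
    destruct Sm' as [Tm' l2].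
    destruct (Htree m) as [_ [Hanti _]].
    assert (e : m' = tt m) by (apply Hanti; assumption).
    subst m'. apply Gn. exists t. split; [exact Hsucc|]. split; [exact Dm| exact (proj1 Hsucc)].
Qed.
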